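(* For all $a,b\in\mathbb R$, each of the following systems has an isochronous center at the origin $O$ with zero Urabe function: (i) $\dot x=-y+axy+a^2x^2y+x^2-ax^3-a^2x^4$, $\dot y=x+3ay^2-2xy-ax^2+2a^2xy^2-4ax^2y+2x^3-2a^2x^3y+ax^4$; (ii) $\dot x=-y+axy+3a^2x^2y+x^2-ax^3-3a^2x^4$, $\dot y=x+4ay^2-2xy-\frac32ax^2+6a^2xy^2-6ax^2y+2x^3-6a^2x^3y+2ax^4$; (iii) with $K=a^2-\frac32ab+\frac12b^2$: $\dot x=-y+axy+Kx^2y+x^2-ax^3-Kx^4$, $\dot y=x+by^2-2xy+\frac{a-b}{2}x^2+2Kxy^2+2(a-b)x^2y+2x^3-2Kx^3y+(b-2a)x^4$.
   Context: For a real planar polynomial system $\dot x=-y+A(x,y)$, $\dot y=x+B(x,y)$, with $A,B$ polynomials having no terms of degree $<2$, the origin $O$ is an isochronous center if there is a punctured neighborhood of $O$ in which every orbit is a closed orbit surrounding $O$ and all these orbits have the same period. Zero Urabe function: write the system as $\dot x=p_0(x)+p_1(x)y$, $\dot y=q_0(x)+q_1(x)y+q_2(x)y^2$ ($p_0(0)=q_0(0)=0$, $p_1(0)\ne0$), where it holds that $-\frac{p_1'p_0}{p_1}+q_1+p_0'-\frac{2q_2p_0}{p_1}\equiv0$. Put $f=-\frac{q_2+p_1'}{p_1}$, $g=-\frac{q_2p_0^2}{p_1}+q_1p_0-p_1q_0$ (the change $z=p_0+p_1y$ gives $\dot x=z$, $\dot z=-g(x)-f(x)z^2$), $F(x)=\int_0^xf$,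 and $\xi$ near $0$ by $\frac12\xi(x)^2=\int_0^xg(s)e^{2F(s)}ds$, $x\xi(x)>0$ for $x\ne0$. The Urabe function of an isochronous center is the odd analytic $h$ with $\frac{\xi(x)}{1+h(\xi(x))}=g(x)e^{F(x)}$; ''zero Urabe function'' means $h\equiv0$, i.e. $\xi(x)=g(x)e^{F(x)}$ near $0$. *)

(* Defs.v *)
From Stdlib Require Import Reals.
Open Scope R_scope.

Definition is_solution (P Q : R -> R -> R) (x y : R -> R) : Prop :=
  forall t, derivable_pt_lim x t (P (x t) (y t)) /\
            derivable_pt_lim y t (Q (x t) (y t)).

(* O is an isochronous center: there is a punctured neighbourhood
   0 < |p| < delta of O such that the orbit through every p in it is a
   closed orbit (periodic solution, minimal period T, T common to all)
   surrounding O (nonzero winding number around O, expressed through a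
   continuous polar angle theta: over one period theta changes). *)
Definition isochronous_center (P Q : R -> R -> R) : Prop :=
  exists delta T : R, 0 < delta /\ 0 < T /\
    forall x0 y0 : R, 0 < x0 ^ 2 + y0 ^ 2 < delta ^ 2 ->
      exists x y theta r : R -> R,
        is_solution P Q x y /\ x 0 = x0 /\ y 0 = y0 /\
        (forall t, x (t + T) = x t /\ y (t + T) = y t) /\
        (forall s, 0 < s < T -> ~ (x s = x0 /\ y s = y0)) /\
        continuity theta /\
        (forall t, 0 < r t /\ x t = r t * cos (theta t) /\
                   y t = r t * sin (theta t)) /\
        theta T <> theta 0.

Definition xi_of (G : R -> R) (x : R) : R :=
  if Rle_dec 0 x then sqrt (2 * G x) else - sqrt (2 * G x).

(* Zero Urabe function, for a system written as
     x' = p0(x) + p1(x) y,  y' = q0(x) + q1(x) y + q2(x) y^2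
   (this decomposition is unique for P affine in y, Q quadratic in y).
   F(x) = int_0^x f and G(x) = int_0^x g e^{2F} are given as the
   antiderivatives vanishing at 0 on a neighbourhood (-delta, delta). *)
Definition zero_urabe (P Q : R -> R -> R) : Prop :=
  exists (p0 p1 q0 q1 q2 dp0 dp1 F G : R -> R) (delta : R),
    (forall x y, P x y = p0 x + p1 x * y) /\
    (forall x y, Q x y = q0 x + q1 x * y + q2 x * y ^ 2) /\
    p0 0 = 0 /\ q0 0 = 0 /\ p1 0 <> 0 /\
    (forall x, derivable_pt_lim p0 x (dp0 x)) /\
    (forall x, derivable_pt_lim p1 x (dp1 x)) /\
    0 < delta /\
    let f := fun x => - (q2 x + dp1 x) / p1 x in
    let g := fun x => - q2 x * p0 x ^ 2 / p1 x + q1 x * p0 x - p1 x * q0 x in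
    F 0 = 0 /\ G 0 = 0 /\
    forall x, - delta < x < delta ->
      p1 x <> 0 /\
      - dp1 x * p0 x / p1 x + q1 x + dp0 x - 2 * q2 x * p0 x / p1 x = 0 /\
      derivable_pt_lim F x (f x) /\
      derivable_pt_lim G x (g x * exp (2 * F x)) /\
      0 <= G x /\
      (x <> 0 -> 0 < x * xi_of G x) /\
      xi_of G x = g x * exp (F x).

Definition P1 (a : R) (x y : R) : R :=
  - y + a * x * y + a ^ 2 * x ^ 2 * y + x ^ 2 - a * x ^ 3 - a ^ 2 * x ^ 4.
Definition Q1 (a : R) (x y : R) : R :=
  x + 3 * a * y ^ 2 - 2 * x * y - a * x ^ 2 + 2 * a ^ 2 * x * y ^ 2
  - 4 * a * x ^ 2 * y + 2 * x ^ 3 - 2 * a ^ 2 * x ^ 3 * y + a * x ^ 4.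

Definition P2 (a : R) (x y : R) : R :=
  - y + a * x * y + 3 * a ^ 2 * x ^ 2 * y + x ^ 2 - a * x ^ 3 - 3 * a ^ 2 * x ^ 4.
Definition Q2 (a : R) (x y : R) : R :=
  x + 4 * a * y ^ 2 - 2 * x * y - 3 / 2 * a * x ^ 2 + 6 * a ^ 2 * x * y ^ 2
  - 6 * a * x ^ 2 * y + 2 * x ^ 3 - 6 * a ^ 2 * x ^ 3 * y + 2 * a * x ^ 4.

Definition K3 (a b : R) : R := a ^ 2 - 3 / 2 * a * b + 1 / 2 * b ^ 2.
Definition P3 (a b : R) (x y : R) : R :=
  - y + a * x * y + K3 a b * x ^ 2 * y + x ^ 2 - a * x ^ 3 - K3 a b * x ^ 4.
Definition Q3 (a b : R) (x y : R) : R :=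
  x + b * y ^ 2 - 2 * x * y + (a - b) / 2 * x ^ 2 + 2 * K3 a b * x * y ^ 2
  + 2 * (a - b) * x ^ 2 * y + 2 * x ^ 3 - 2 * K3 a b * x ^ 3 * y
  + (b - 2 * a) * x ^ 4.

(* Main.v *)
Require Import Defs.
From Stdlib Require Import Reals Ranalysis5 Ratan Lra Psatz Classical ClassicalEpsilon FunctionalExtensionality.
Open Scope R_scope.

Definition cc (a b : R) := (a - b) / 2.
Definition ww (a b x : R) := 1 - a * x - K3 a b * x ^ 2.
Definition gg (a b x : R) := ww a b x * (x * (1 + cc a b * x)).
Definition gd (a b x : R) :=
  (- a - 2 * K3 a b * x) * (x * (1 + cc a b * x)) + ww a b x * (1 + 2 * cc a b * x).
Definition fr (a b x : R) := (a + b + 4 * K3 a b * x) / ww a b x.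
Definition dd (a b : R) := / (4 * (Rabs a + Rabs (K3 a b) + Rabs (cc a b) + 2)).

Lemma abs_bd u : - Rabs u <= u <= Rabs u.
Proof. split; [ | apply Rle_abs]. rewrite <- Rabs_Ropp. pose proof (Rle_abs (-u)). lra. Qed.

Lemma pow2_gt_0 x : x <> 0 -> 0 < x ^ 2.
Proof. intros h. pose proof (Rlt_0_sqr x h). unfold Rsqr in H. simpl. lra. Qed.

Lemma dd_pos a b : 0 < dd a b.
Proof. unfold dd. pose proof (Rabs_pos a); pose proof (Rabs_pos (K3 a b)); pose proof (Rabs_pos (cc a b)).
  apply Rinv_0_lt_compat; lra. Qed.

Lemma dd_small a b : dd a b <= 1/8.
Proof. unfold dd. pose proof (Rabs_pos a); pose proof (Rabs_pos (K3 a b)); pose proof (Rabs_pos (cc a b)).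
  set (S := Rabs a + Rabs (K3 a b) + Rabs (cc a b) + 2).
  assert (2 <= S) by (unfold S; lra).
  apply (Rmult_le_reg_l (4*S)); [lra|]. rewrite Rinv_r by lra. nra. Qed.

Lemma bounds a b x : - dd a b <= x <= dd a b ->
  3/4 <= ww a b x <= 5/4 /\ 3/4 <= 1 + cc a b * x <= 5/4 /\ -1/8 <= x <= 1/8.
Proof.
  intros Hx. pose proof (dd_small a b). pose proof (dd_pos a b).
  pose proof (abs_bd a); pose proof (abs_bd (K3 a b)); pose proof (abs_bd (cc a b)).
  set (A := Rabs a) in *. set (B := Rabs (K3 a b)) in *. set (C := Rabs (cc a b)) in *.
  assert (HS : 4 * (A + B + C + 2) * dd a b = 1).
  { unfold dd. fold A B C. field. pose proof (Rabs_pos a); pose proof (Rabs_pos (K3 a b)); pose proof (Rabs_pos (cc a b)). fold A B C in H4, H5, H6. lra. }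
  set (d := dd a b) in *.
  assert (h1 : Rabs (a * x) <= A * d).
  { rewrite Rabs_mult. apply Rmult_le_compat; try apply Rabs_pos. apply Rle_refl. apply Rabs_le; lra. }
  assert (h2 : Rabs (K3 a b * x^2) <= B * d).
  { rewrite Rabs_mult. apply Rmult_le_compat; try apply Rabs_pos. apply Rle_refl. rewrite Rabs_right by (apply Rle_ge; apply pow2_ge_0). nra. }
  assert (h3 : Rabs (cc a b * x) <= C * d).
  { rewrite Rabs_mult. apply Rmult_le_compat; try apply Rabs_pos. apply Rle_refl. apply Rabs_le; lra. }
  pose proof (abs_bd (a*x)); pose proof (abs_bd (K3 a b * x^2)); pose proof (abs_bd (cc a b * x)).
  assert (0 <= A) by apply Rabs_pos. assert (0 <= B) by apply Rabs_pos. assert (0 <= C) by apply Rabs_pos.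
  unfold ww. repeat split; nra.
Qed.
Lemma D_eq f x l1 l2 : derivable_pt_lim f x l1 -> l1 = l2 -> derivable_pt_lim f x l2.
Proof. intros H ->; exact H. Qed.
Lemma D_const (c x : R) : derivable_pt_lim (fun _ => c) x 0.
Proof. apply derivable_pt_lim_const. Qed.
Lemma D_id x : derivable_pt_lim (fun t => t) x 1.
Proof. apply derivable_pt_lim_id. Qed.
Lemma D_plus f g x lf lg : derivable_pt_lim f x lf -> derivable_pt_lim g x lg ->
  derivable_pt_lim (fun t => f t + g t) x (lf + lg).
Proof. apply derivable_pt_lim_plus. Qed.
Lemma D_minus f g x lf lg : derivable_pt_lim f x lf -> derivable_pt_lim g x lg ->
  derivable_pt_lim (fun t => f t - g t) x (lf - lg).
Proof. apply derivable_pt_lim_minus. Qed.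
Lemma D_mult f g x lf lg : derivable_pt_lim f x lf -> derivable_pt_lim g x lg ->
  derivable_pt_lim (fun t => f t * g t) x (lf * g x + f x * lg).
Proof. apply derivable_pt_lim_mult. Qed.
Lemma D_opp f x lf : derivable_pt_lim f x lf -> derivable_pt_lim (fun t => - f t) x (- lf).
Proof. apply derivable_pt_lim_opp. Qed.
Lemma D_comp f g x lf lg : derivable_pt_lim f x lf -> derivable_pt_lim g (f x) lg ->
  derivable_pt_lim (fun t => g (f t)) x (lg * lf).
Proof. intros; apply (derivable_pt_lim_comp f g); auto. Qed.
Lemma D_pow f n x lf : derivable_pt_lim f x lf ->
  derivable_pt_lim (fun t => f t ^ n) x (INR n * f x ^ pred n * lf).
Proof. intros H. apply (D_comp f (fun y => y ^ n)); auto. apply derivable_pt_lim_pow. Qed.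
Lemma D_exp f x lf : derivable_pt_lim f x lf ->
  derivable_pt_lim (fun t => exp (f t)) x (exp (f x) * lf).
Proof. intros H. apply (D_comp f exp); auto. apply derivable_pt_lim_exp. Qed.
Lemma D_cos f x lf : derivable_pt_lim f x lf ->
  derivable_pt_lim (fun t => cos (f t)) x (- sin (f x) * lf).
Proof. intros H. apply (D_comp f cos); auto. apply derivable_pt_lim_cos. Qed.
Lemma D_sin f x lf : derivable_pt_lim f x lf ->
  derivable_pt_lim (fun t => sin (f t)) x (cos (f x) * lf).
Proof. intros H. apply (D_comp f sin); auto. apply derivable_pt_lim_sin. Qed.
Lemma D_div f g x lf lg : derivable_pt_lim f x lf -> derivable_pt_lim g x lg -> g x <> 0 ->
  derivable_pt_lim (fun t => f t / g t) x ((lf * g x - lg * f x) / (g x)^2).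
Proof. intros H1 H2 H3. eapply D_eq. apply (derivable_pt_lim_div f g); [exact H1|exact H2|exact H3]. unfold Rsqr; simpl; rewrite Rmult_1_r; reflexivity. Qed.

Lemma D_atan f x lf : derivable_pt_lim f x lf ->
  derivable_pt_lim (fun t => atan (f t)) x (/ (1 + f x ^ 2) * lf).
Proof. intros H. apply (D_comp f atan); auto. apply derivable_pt_lim_atan. Qed.

Ltac dauto := repeat first [ apply D_const | apply D_id | apply D_plus | apply D_minus
  | apply D_mult | apply D_opp | apply D_pow | apply D_exp | apply D_cos | apply D_sin | apply D_div ].


Lemma exp_le a0 b0 : a0 <= b0 -> exp a0 <= exp b0.
Proof. intros [H|H]. left; apply exp_increasing; auto. subst; lra. Qed.

Lemma ww_pos a b x : - dd a b <= x <= dd a b -> 0 < ww a b x.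
Proof. intros H; destruct (bounds a b x H) as [? ?]; lra. Qed.

Lemma ww_D a b x : derivable_pt_lim (ww a b) x (- a - 2 * K3 a b * x).
Proof. unfold ww. eapply D_eq. dauto. simpl; ring. Qed.

Lemma gg_D a b x : derivable_pt_lim (gg a b) x (gd a b x).
Proof. unfold gg, gd. eapply D_eq. apply D_mult. apply ww_D. dauto. simpl. ring. Qed.

Lemma gd_fr a b x : - dd a b <= x <= dd a b -> gd a b x + fr a b x * gg a b x = 1.
Proof. intros H. pose proof (ww_pos a b x H). unfold gd, fr, gg.
  replace ((a + b + 4 * K3 a b * x) / ww a b x * (ww a b x * (x * (1 + cc a b * x))))
    with ((a + b + 4 * K3 a b * x) * (x * (1 + cc a b * x))) by (field; lra).
  unfold ww, K3, cc. field. Qed.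

Lemma fr_cont a b x : - dd a b <= x <= dd a b -> continuity_pt (fr a b) x.
Proof. intros H. pose proof (ww_pos a b x H). apply derivable_continuous_pt. econstructor.
  unfold fr. apply D_div. dauto. apply ww_D. lra. Qed.

Lemma F_exists a b : exists F, F 0 = 0 /\ forall x, - dd a b <= x <= dd a b -> derivable_pt_lim F x (fr a b x).
Proof.
  assert (h : - dd a b <= dd a b) by (pose proof (dd_pos a b); lra).
  exists (fun x => primitive h (FTC_P1 h (fr_cont a b)) x - primitive h (FTC_P1 h (fr_cont a b)) 0).
  split. ring. intros x Hx. eapply D_eq. apply D_minus. apply RiemannInt_P28. exact Hx. apply D_const. ring.
Qed.

Section Core.
Variables a b : R.
Variable F : R -> R.
Hypothesis HF0 : F 0 = 0.
Hypothesis HFd : forall x, - dd a b <= x <= dd a b -> derivable_pt_lim F x (fr a b x).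

Definition xi x := gg a b x * exp (F x).

Lemma xi_D x : - dd a b <= x <= dd a b -> derivable_pt_lim xi x (exp (F x)).
Proof. intros H. unfold xi. eapply D_eq. apply D_mult. apply gg_D. apply D_exp. apply HFd; auto.
  transitivity (exp (F x) * (gd a b x + fr a b x * gg a b x)); [ring|]. rewrite gd_fr; auto; ring. Qed.

Lemma xi_cont x : - dd a b <= x <= dd a b -> continuity_pt xi x.
Proof. intros H. apply derivable_continuous_pt. econstructor. apply xi_D; auto. Qed.

Definition Mf := 2 * (Rabs a + Rabs b + Rabs (K3 a b)).
Definition BB := Mf * dd a b.

Lemma fr_bd x : - dd a b <= x <= dd a b -> - Mf <= fr a b x <= Mf.
Proof. intros H. destruct (bounds a b x H) as [Hw [_ Hx]].
  assert (E : fr a b x * ww a b x = a + b + 4 * K3 a b * x) by (unfold fr; field; lra).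
  pose proof (abs_bd a); pose proof (abs_bd b); pose proof (abs_bd (K3 a b)).
  unfold Mf. set (v := fr a b x) in *. set (w := ww a b x) in *.
  set (A := Rabs a) in *. set (B := Rabs b) in *. set (C := Rabs (K3 a b)) in *.
  assert (h1 : 4 * K3 a b * x <= C / 2) by nra.
  assert (h2 : - (C / 2) <= 4 * K3 a b * x) by nra.
  split; nra.
Qed.

Lemma BB_pos : 0 <= BB.
Proof. unfold BB, Mf. pose proof (dd_pos a b). pose proof (Rabs_pos a); pose proof (Rabs_pos b);
  pose proof (Rabs_pos (K3 a b)). nra. Qed.

Lemma F_bd x : - dd a b <= x <= dd a b -> - BB <= F x <= BB.
Proof. intros H. unfold BB. pose proof (dd_pos a b).
  destruct (Rtotal_order x 0) as [Hlt|[Heq|Hgt]].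
  - destruct (MVT_cor2 F (fr a b) x 0 Hlt) as [c [Hc1 Hc2]].
    { intros c Hc. apply HFd. lra. }
    pose proof (fr_bd c ltac:(lra)). rewrite HF0 in Hc1. split; nra.
  - subst. rewrite HF0. pose proof BB_pos. unfold BB in H1. lra.
  - destruct (MVT_cor2 F (fr a b) 0 x Hgt) as [c [Hc1 Hc2]].
    { intros c Hc. apply HFd. lra. }
    pose proof (fr_bd c ltac:(lra)). rewrite HF0 in Hc1. split; nra.
Qed.

Definition Em := exp (- BB).
Definition EM := exp BB.

Lemma E_bd x : - dd a b <= x <= dd a b -> Em <= exp (F x) <= EM.
Proof. intros H. destruct (F_bd x H). unfold Em, EM. split; apply exp_le; lra. Qed.

Lemma Em_pos : 0 < Em.
Proof. apply exp_pos. Qed.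

Lemma Em_EM : Em <= EM.
Proof. unfold Em, EM. apply exp_le. pose proof BB_pos. lra. Qed.

Lemma xi_incr x y : - dd a b <= x -> x < y -> y <= dd a b -> xi x < xi y.
Proof. intros H1 H2 H3. destruct (MVT_cor2 xi (fun t => exp (F t)) x y H2) as [c [Hc1 Hc2]].
  { intros c Hc. apply xi_D. lra. }
  pose proof (exp_pos (F c)). nra. Qed.


Definition HFP := F 0 = 0 /\ forall x, - dd a b <= x <= dd a b -> derivable_pt_lim F x (fr a b x).

Lemma xinv_ex X : exists x, (HFP -> xi (- dd a b) <= X <= xi (dd a b) ->
   - dd a b <= x <= dd a b /\ xi x = X).
Proof.
  destruct (classic (xi (- dd a b) <= X <= xi (dd a b))) as [Hr|N].
  - pose proof (dd_pos a b).
    destruct (f_interv_is_interv xi (- dd a b) (dd a b) X ltac:(lra) Hr) as [x Hx].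
    { intros; apply xi_cont; auto. }
    exists x; intros; auto.
  - exists 0; intros; exfalso; auto.
Qed.

Definition xinv X := proj1_sig (constructive_indefinite_description _ (xinv_ex X)).

Lemma xinv_spec X : xi (- dd a b) <= X <= xi (dd a b) ->
   - dd a b <= xinv X <= dd a b /\ xi (xinv X) = X.
Proof. intros H. unfold xinv. destruct (constructive_indefinite_description _ (xinv_ex X)) as [x Hx].
  simpl. apply Hx; auto. split; auto. Qed.

Lemma xi_inj x y : - dd a b <= x <= dd a b -> - dd a b <= y <= dd a b -> xi x = xi y -> x = y.
Proof. intros H1 H2 E. destruct (Rtotal_order x y) as [h|[h|h]]; auto.
  - pose proof (xi_incr x y ltac:(lra) h ltac:(lra)); lra.
  - pose proof (xi_incr y x ltac:(lra) h ltac:(lra)); lra. Qed.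

Lemma xi_range x : - dd a b <= x <= dd a b -> xi (- dd a b) <= xi x <= xi (dd a b).
Proof. intros H. split.
  - destruct (Req_dec x (- dd a b)) as [->|n]; [lra|]. left; apply xi_incr; lra.
  - destruct (Req_dec x (dd a b)) as [->|n]; [lra|]. left; apply xi_incr; lra. Qed.

Lemma xinv_xi x : - dd a b <= x <= dd a b -> xinv (xi x) = x.
Proof. intros H. destruct (xinv_spec (xi x) (xi_range x H)) as [h1 h2]. apply xi_inj; auto. Qed.

Lemma xinv_D X : xi (- dd a b) < X < xi (dd a b) ->
  derivable_pt_lim xinv X (/ exp (F (xinv X))).
Proof.
  intros HX. pose proof (dd_pos a b).
  assert (Hlu : xi (- dd a b) < xi (dd a b)) by lra.
  assert (Prf : forall a0, xinv (xi (- dd a b)) <= a0 <= xinv (xi (dd a b)) -> derivable_pt xi a0).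
  { intros a0 Ha0. rewrite !xinv_xi in Ha0 by lra. econstructor. apply xi_D; auto. }
  assert (Prg : continuity_pt xinv X).
  { apply (continuity_pt_recip_interv xi xinv (- dd a b) (dd a b)); try lra.
    - intros; apply xi_incr; auto.
    - intros x h1 h2. unfold comp, id. apply xinv_spec; lra.
    - intros x h1 h2. apply xinv_spec; lra.
    - intros; apply xi_cont; auto. }
  assert (Hin : xinv (xi (- dd a b)) <= xinv X <= xinv (xi (dd a b))).
  { rewrite !xinv_xi by lra. apply xinv_spec; lra. }
  eapply D_eq.
  apply (derivable_pt_lim_recip_interv xi xinv (xi (- dd a b)) (xi (dd a b)) X Prf Prg Hlu HX Hin).
  - intros x h. unfold comp, id. apply xinv_spec; lra.
  - rewrite (derive_pt_eq_0 _ _ (exp (F (xinv X)))). apply Rgt_not_eq, exp_pos.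
    apply xi_D. rewrite !xinv_xi in Hin by lra. exact Hin.
  - rewrite (derive_pt_eq_0 _ _ (exp (F (xinv X)))). unfold Rdiv; ring.
    apply xi_D. rewrite !xinv_xi in Hin by lra. exact Hin.
Qed.


Definition Xt (X0 Y0 t : R) := X0 * cos t + Y0 * sin t.
Definition Yt (X0 Y0 t : R) := Y0 * cos t - X0 * sin t.

Lemma XY_norm X0 Y0 t : Xt X0 Y0 t ^ 2 + Yt X0 Y0 t ^ 2 = X0 ^ 2 + Y0 ^ 2.
Proof. unfold Xt, Yt. pose proof (sin2_cos2 t). unfold Rsqr in H. nra. Qed.

Lemma Xt_D X0 Y0 t : derivable_pt_lim (Xt X0 Y0) t (Yt X0 Y0 t).
Proof. unfold Xt, Yt. eapply D_eq. dauto. cbv beta; ring. Qed.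

Lemma Yt_D X0 Y0 t : derivable_pt_lim (Yt X0 Y0) t (- Xt X0 Y0 t).
Proof. unfold Xt, Yt. eapply D_eq. dauto. cbv beta; ring. Qed.

Lemma xi_d_bd : dd a b * Em / 2 < xi (dd a b) /\ xi (- dd a b) < - (dd a b * Em / 2).
Proof. pose proof (dd_pos a b). pose proof Em_pos. assert (0 < dd a b * Em) by (apply Rmult_lt_0_compat; lra).
  assert (h1 : - dd a b <= dd a b <= dd a b) by lra.
  assert (h2 : - dd a b <= - dd a b <= dd a b) by lra.
  destruct (bounds a b _ h1) as [w1 [c1 _]]. destruct (bounds a b _ h2) as [w2 [c2 _]].
  destruct (E_bd _ h1). destruct (E_bd _ h2).
  unfold xi, gg. split.
  - assert (h3 : 9/16 * dd a b <= ww a b (dd a b) * (dd a b * (1 + cc a b * dd a b))).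
    { assert (hh : 3/4 * dd a b <= dd a b * (1 + cc a b * dd a b)) by nra.
      replace (9/16 * dd a b) with (3/4 * (3/4 * dd a b)) by field.
      apply Rmult_le_compat; lra. }
    set (G := ww a b (dd a b) * (dd a b * (1 + cc a b * dd a b))) in *.
    set (e := exp (F (dd a b))) in *.
    assert (h4 : 9/16 * dd a b * Em <= G * e).
    { apply Rmult_le_compat; lra. }
    lra.
  - assert (h3 : 9/16 * dd a b <= ww a b (- dd a b) * (dd a b * (1 + cc a b * - dd a b))).
    { assert (hh : 3/4 * dd a b <= dd a b * (1 + cc a b * - dd a b)) by nra.
      replace (9/16 * dd a b) with (3/4 * (3/4 * dd a b)) by field.
      apply Rmult_le_compat; lra. }
    replace (ww a b (- dd a b) * (- dd a b * (1 + cc a b * - dd a b))) with (- (ww a b (- dd a b) * (dd a b * (1 + cc a b * - dd a b)))) by ring.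
    set (G := ww a b (- dd a b) * (dd a b * (1 + cc a b * - dd a b))) in *.
    set (e := exp (F (- dd a b))) in *.
    assert (h4 : 9/16 * dd a b * Em <= G * e).
    { apply Rmult_le_compat; lra. }
    lra.
Qed.

Lemma X_in X0 Y0 t : X0 ^ 2 + Y0 ^ 2 < (dd a b * Em / 2) ^ 2 ->
  xi (- dd a b) < Xt X0 Y0 t < xi (dd a b).
Proof. intros H. pose proof (XY_norm X0 Y0 t). destruct xi_d_bd.
  pose proof (dd_pos a b). pose proof Em_pos. pose proof (pow2_ge_0 (Yt X0 Y0 t)).
  assert (0 < dd a b * Em / 2) by (apply Rmult_lt_0_compat; try lra; apply Rmult_lt_0_compat; lra).
  set (X := Xt X0 Y0 t) in *. set (m := dd a b * Em / 2) in *. split; nra. Qed.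

Definition xs X0 Y0 t := xinv (Xt X0 Y0 t).
Definition ys X0 Y0 t := xs X0 Y0 t ^ 2 - Yt X0 Y0 t / (exp (F (xs X0 Y0 t)) * ww a b (xs X0 Y0 t)).

Section Sol.
Variables X0 Y0 : R.
Hypothesis Hsmall : X0 ^ 2 + Y0 ^ 2 < (dd a b * Em / 2) ^ 2.

Lemma xs_in t : - dd a b <= xs X0 Y0 t <= dd a b /\ xi (xs X0 Y0 t) = Xt X0 Y0 t.
Proof. unfold xs. apply xinv_spec. pose proof (X_in X0 Y0 t Hsmall). lra. Qed.

Lemma xs_D t : derivable_pt_lim (xs X0 Y0) t (/ exp (F (xs X0 Y0 t)) * Yt X0 Y0 t).
Proof. unfold xs. apply (D_comp (Xt X0 Y0) xinv). apply Xt_D. apply xinv_D. apply X_in; auto. Qed.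

Lemma alg_P x Yv Ev : - dd a b <= x <= dd a b -> Ev <> 0 ->
  P3 a b x (x ^ 2 - Yv / (Ev * ww a b x)) = / Ev * Yv.
Proof. intros H HE. pose proof (ww_pos a b x H). unfold P3. unfold ww in *. field. split; lra. Qed.

Lemma sol_is : is_solution (P3 a b) (Q3 a b) (xs X0 Y0) (ys X0 Y0).
Proof.
  intros t. destruct (xs_in t) as [Hin Hxi]. pose proof (ww_pos a b _ Hin).
  pose proof (exp_pos (F (xs X0 Y0 t))).
  split.
  - unfold ys. rewrite alg_P; auto. apply xs_D. lra.
  - assert (DE : derivable_pt_lim (fun s => exp (F (xs X0 Y0 s))) t
       (exp (F (xs X0 Y0 t)) * (fr a b (xs X0 Y0 t) * (/ exp (F (xs X0 Y0 t)) * Yt X0 Y0 t)))).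
    { apply (D_exp (fun s => F (xs X0 Y0 s))). exact (D_comp (xs X0 Y0) F t _ _ (xs_D t) (HFd _ Hin)). }
    assert (Dw : derivable_pt_lim (fun s => ww a b (xs X0 Y0 s)) t
       ((- a - 2 * K3 a b * xs X0 Y0 t) * (/ exp (F (xs X0 Y0 t)) * Yt X0 Y0 t))).
    { exact (D_comp (xs X0 Y0) (ww a b) t _ _ (xs_D t) (ww_D a b _)). }
    unfold ys. eapply D_eq.
    + apply D_minus. apply D_pow. apply xs_D. apply D_div. apply Yt_D. apply D_mult. exact DE. exact Dw.
      apply Rmult_integral_contrapositive; split; lra.
    + rewrite <- Hxi. unfold xi. simpl pred.
      set (x := xs X0 Y0 t) in *. set (E := exp (F x)) in *. set (Yv := Yt X0 Y0 t).
      unfold Q3, fr, gg, ww, K3, cc in *. simpl INR. field. split; lra.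
Qed.


Lemma Xt_per t : Xt X0 Y0 (t + 2 * PI) = Xt X0 Y0 t.
Proof. unfold Xt. rewrite cos_plus, sin_plus, cos_2PI, sin_2PI. ring. Qed.
Lemma Yt_per t : Yt X0 Y0 (t + 2 * PI) = Yt X0 Y0 t.
Proof. unfold Yt. rewrite cos_plus, sin_plus, cos_2PI, sin_2PI. ring. Qed.

Lemma sol_per t : xs X0 Y0 (t + 2 * PI) = xs X0 Y0 t /\ ys X0 Y0 (t + 2 * PI) = ys X0 Y0 t.
Proof. unfold ys, xs. rewrite Xt_per, Yt_per. auto. Qed.

Hypothesis HR0 : 0 < X0 ^ 2 + Y0 ^ 2.

Lemma cos1_sin0 s : 0 < s < 2 * PI -> cos s = 1 -> sin s = 0 -> False.
Proof. intros Hs Hc Hsn. pose proof PI_RGT_0.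
  destruct (Rtotal_order s PI) as [h|[h|h]].
  - pose proof (sin_gt_0 s ltac:(lra) h). lra.
  - subst. rewrite cos_PI in Hc. lra.
  - pose proof (sin_lt_0 s h ltac:(lra)). lra. Qed.

Lemma sol_min s : 0 < s < 2 * PI ->
  ~ (xs X0 Y0 s = xs X0 Y0 0 /\ ys X0 Y0 s = ys X0 Y0 0).
Proof.
  intros Hs [E1 E2].
  assert (HX : Xt X0 Y0 s = Xt X0 Y0 0).
  { destruct (xs_in s) as [_ h1]. destruct (xs_in 0) as [_ h2]. rewrite <- h1, <- h2, E1. auto. }
  assert (HY : Yt X0 Y0 s = Yt X0 Y0 0).
  { unfold ys in E2. rewrite E1 in E2. destruct (xs_in 0) as [hin _].
    pose proof (ww_pos a b _ hin). pose proof (exp_pos (F (xs X0 Y0 0))).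
    set (q := exp (F (xs X0 Y0 0)) * ww a b (xs X0 Y0 0)) in *.
    assert (0 < q) by (apply Rmult_lt_0_compat; auto).
    assert (Yt X0 Y0 s / q = Yt X0 Y0 0 / q) by lra.
    apply (Rmult_eq_reg_r (/ q)). exact H2. apply Rinv_neq_0_compat; lra. }
  unfold Xt, Yt in HX, HY. rewrite cos_0, sin_0 in HX, HY.
  assert (Hc : (X0 ^ 2 + Y0 ^ 2) * cos s = (X0 ^ 2 + Y0 ^ 2) * 1).
  { transitivity (X0 * (X0 * cos s + Y0 * sin s) + Y0 * (Y0 * cos s - X0 * sin s)); [ring|].
    rewrite HX, HY. ring. }
  assert (Hsn : (X0 ^ 2 + Y0 ^ 2) * sin s = (X0 ^ 2 + Y0 ^ 2) * 0).
  { transitivity (Y0 * (X0 * cos s + Y0 * sin s) - X0 * (Y0 * cos s - X0 * sin s)); [ring|].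
    rewrite HX, HY. ring. }
  apply Rmult_eq_reg_l in Hc; [|lra]. apply Rmult_eq_reg_l in Hsn; [|lra].
  exact (cos1_sin0 s Hs Hc Hsn).
Qed.


Lemma sol_pos t : 0 < xs X0 Y0 t * Xt X0 Y0 t - ys X0 Y0 t * Yt X0 Y0 t.
Proof.
  destruct (xs_in t) as [Hin Hxi]. pose proof (XY_norm X0 Y0 t).
  destruct (bounds a b _ Hin) as [Hw [Hc Hx]]. destruct (E_bd _ Hin) as [HE1 HE2].
  pose proof Em_pos. pose proof (dd_pos a b). pose proof (dd_small a b).
  unfold xi in Hxi. unfold ys.
  set (x := xs X0 Y0 t) in *. set (E := exp (F x)) in *. set (w := ww a b x) in *.
  set (Xv := Xt X0 Y0 t) in *. set (Yv := Yt X0 Y0 t) in *.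
  set (q := Yv / (E * w)).
  assert (HEw : 3/4 * Em <= E * w) by (rewrite (Rmult_comm (3/4)); apply Rmult_le_compat; lra).
  assert (HYq : Yv = q * (E * w)) by (unfold q; field; split; lra).
  assert (HY2 : Yv ^ 2 < (Em / 16) ^ 2).
  { assert (dd a b * Em / 2 <= Em / 16) by nra. pose proof (pow2_ge_0 Xv).
    assert (0 <= dd a b * Em / 2) by nra.
    assert ((dd a b * Em / 2) ^ 2 <= (Em / 16) ^ 2) by (apply pow_incr; lra). lra. }
  assert (Hq : q ^ 2 < (1/12) ^ 2).
  { rewrite HYq in HY2. assert (hA : q ^ 2 * (3/4 * Em) ^ 2 <= q ^ 2 * (E * w) ^ 2).
    { apply Rmult_le_compat_l. apply pow2_ge_0. apply pow_incr. nra. }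
    assert (hB : q ^ 2 * (3/4 * Em) ^ 2 < (Em / 16) ^ 2).
    { replace ((q * (E * w)) ^ 2) with (q ^ 2 * (E * w) ^ 2) in HY2 by ring. lra. }
    assert (hC : q ^ 2 * (3/4 * Em) ^ 2 < (1/12) ^ 2 * (3/4 * Em) ^ 2).
    { replace ((1/12) ^ 2 * (3/4 * Em) ^ 2) with ((Em / 16) ^ 2) by field. exact hB. }
    apply Rmult_lt_reg_r in hC; auto. apply pow2_gt_0. pose proof Em_pos. lra. }
  assert (Hq2 : -1/12 < q < 1/12) by nra.
  set (y := x ^ 2 - q).
  assert (Hy : -1/4 <= y <= 1/4) by (unfold y; nra).
  assert (Key : x * Xv - y * Yv = E * w * (x ^ 2 * (1 + cc a b * x) - y * x ^ 2 + y ^ 2)).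
  { rewrite <- Hxi, HYq. unfold gg. fold w. unfold y. ring. }
  fold y. rewrite Key.
  assert (HS : x ^ 2 / 2 + y ^ 2 <= x ^ 2 * (1 + cc a b * x) - y * x ^ 2 + y ^ 2) by nra.
  assert (HS2 : 0 < x ^ 2 / 2 + y ^ 2).
  { destruct (Req_dec x 0) as [hx|hx].
    - destruct (Req_dec y 0) as [hy|hy].
      + exfalso. assert (h0 : q = 0) by (unfold y in hy; rewrite hx in hy; lra).
        assert (h1 : Xv = 0) by (rewrite <- Hxi, hx; unfold gg; ring).
        assert (h2 : Yv = 0) by (rewrite HYq, h0; ring).
        rewrite h1, h2 in H. lra.
      + pose proof (pow2_ge_0 x). assert (0 < y ^ 2) by (apply pow2_gt_0; auto). lra.
    - pose proof (pow2_ge_0 y). assert (0 < x ^ 2) by (apply pow2_gt_0; auto). lra. }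
  apply Rmult_lt_0_compat. apply Rmult_lt_0_compat; lra. lra.
Qed.


Definition R0s := sqrt (X0 ^ 2 + Y0 ^ 2).
Definition cb := X0 / R0s.
Definition sb := - Y0 / R0s.
Definition beta := if Rle_dec 0 sb then acos cb else - acos cb.

Lemma R0s_pos : 0 < R0s.
Proof. unfold R0s. apply sqrt_lt_R0. auto. Qed.

Lemma R0s_sq : R0s ^ 2 = X0 ^ 2 + Y0 ^ 2.
Proof. unfold R0s. apply pow2_sqrt. lra. Qed.

Lemma beta_cs : cos beta = cb /\ sin beta = sb.
Proof.
  pose proof R0s_pos. pose proof R0s_sq.
  assert (H1 : cb ^ 2 + sb ^ 2 = 1).
  { unfold cb, sb. replace ((X0 / R0s) ^ 2 + (- Y0 / R0s) ^ 2) with ((X0 ^ 2 + Y0 ^ 2) / R0s ^ 2) by (field; lra).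
    rewrite H0. field. lra. }
  assert (Hb : -1 <= cb <= 1) by nra.
  assert (Hs : 1 - cb ^ 2 = sb ^ 2) by lra.
  unfold beta. destruct (Rle_dec 0 sb) as [h|h].
  - split. apply cos_acos; auto. rewrite sin_acos; auto. unfold Rsqr. replace (1 - cb * cb) with (sb ^ 2) by (simpl; lra).
    apply sqrt_pow2; auto.
  - split. rewrite cos_neg. apply cos_acos; auto. rewrite sin_neg, sin_acos; auto. unfold Rsqr.
    replace (1 - cb * cb) with ((- sb) ^ 2) by (simpl; lra). rewrite sqrt_pow2; lra.
Qed.

Lemma dir t : cos (t + beta) = Xt X0 Y0 t / R0s /\ sin (t + beta) = - Yt X0 Y0 t / R0s.
Proof. destruct beta_cs as [h1 h2]. pose proof R0s_pos. rewrite cos_plus, sin_plus, h1, h2.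
  unfold cb, sb, Xt, Yt. split; field; lra. Qed.

Definition Dd t := xs X0 Y0 t * cos (t + beta) + ys X0 Y0 t * sin (t + beta).
Definition Cc t := ys X0 Y0 t * cos (t + beta) - xs X0 Y0 t * sin (t + beta).
Definition theta t := t + beta + atan (Cc t / Dd t).
Definition rr t := sqrt (xs X0 Y0 t ^ 2 + ys X0 Y0 t ^ 2).

Lemma Dd_pos t : 0 < Dd t.
Proof. unfold Dd. destruct (dir t) as [h1 h2]. rewrite h1, h2. pose proof (sol_pos t). pose proof R0s_pos.
  replace (xs X0 Y0 t * (Xt X0 Y0 t / R0s) + ys X0 Y0 t * (- Yt X0 Y0 t / R0s))
    with ((xs X0 Y0 t * Xt X0 Y0 t - ys X0 Y0 t * Yt X0 Y0 t) / R0s) by (field; lra).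
  apply Rdiv_lt_0_compat; auto. Qed.

Lemma polar t : 0 < rr t /\ xs X0 Y0 t = rr t * cos (theta t) /\ ys X0 Y0 t = rr t * sin (theta t).
Proof.
  pose proof (Dd_pos t). pose proof (sin2_cos2 (t + beta)). unfold Rsqr in H0.
  assert (HDC : Dd t ^ 2 + Cc t ^ 2 = xs X0 Y0 t ^ 2 + ys X0 Y0 t ^ 2).
  { unfold Dd, Cc. set (c := cos (t + beta)) in *. set (s := sin (t + beta)) in *.
    transitivity ((xs X0 Y0 t ^ 2 + ys X0 Y0 t ^ 2) * (s * s + c * c)); [ring|]. rewrite H0. ring. }
  assert (Hr2 : rr t ^ 2 = Dd t ^ 2 + Cc t ^ 2).
  { unfold rr. rewrite pow2_sqrt. auto. pose proof (pow2_ge_0 (xs X0 Y0 t)). pose proof (pow2_ge_0 (ys X0 Y0 t)). lra. }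
  assert (Hr : 0 < rr t).
  { unfold rr. apply sqrt_lt_R0. rewrite <- HDC. pose proof (pow2_ge_0 (Cc t)).
    assert (0 < Dd t ^ 2) by (apply pow2_gt_0; lra). lra. }
  assert (Hsq : sqrt (1 + (Cc t / Dd t)²) = rr t / Dd t).
  { replace (1 + (Cc t / Dd t)²) with ((rr t / Dd t) ^ 2). apply sqrt_pow2.
    apply Rlt_le, Rdiv_lt_0_compat; auto.
    unfold Rsqr. replace ((rr t / Dd t) ^ 2) with (rr t ^ 2 / Dd t ^ 2) by (field; lra).
    rewrite Hr2. field. lra. }
  split; auto. unfold theta. rewrite (cos_plus (t + beta) (atan _)), (sin_plus (t + beta) (atan _)), cos_atan, sin_atan, Hsq.
  split.
  - transitivity (cos (t + beta) * Dd t - sin (t + beta) * Cc t).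
    + unfold Dd, Cc. set (c := cos (t + beta)) in *. set (s := sin (t + beta)) in *.
      transitivity (xs X0 Y0 t * (s * s + c * c)). rewrite H0; ring. ring.
    + field. split; lra.
  - transitivity (sin (t + beta) * Dd t + cos (t + beta) * Cc t).
    + unfold Dd, Cc. set (c := cos (t + beta)) in *. set (s := sin (t + beta)) in *.
      transitivity (ys X0 Y0 t * (s * s + c * c)). rewrite H0; ring. ring.
    + field. split; lra.
Qed.



Lemma theta_cont : continuity theta.
Proof.
  intros t. apply derivable_continuous_pt.
  assert (Hx : forall s, derivable_pt_lim (xs X0 Y0) s (P3 a b (xs X0 Y0 s) (ys X0 Y0 s))).
  { intros s0; apply (sol_is s0). }
  assert (Hy : forall s, derivable_pt_lim (ys X0 Y0) s (Q3 a b (xs X0 Y0 s) (ys X0 Y0 s))).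
  { intros s0; apply (sol_is s0). }
  pose proof (Dd_pos t). unfold Dd in H.
  econstructor. unfold theta, Cc, Dd.
  repeat first [ apply Hx | apply Hy | apply D_const | apply D_id | apply D_plus | apply D_minus
  | apply D_div | apply D_mult | apply D_opp | apply D_cos | apply D_sin | apply D_atan ].
  cbv beta. lra.
Qed.

Lemma theta_per : theta (2 * PI) <> theta 0.
Proof.
  assert (E1 : cos (2 * PI + beta) = cos (0 + beta)).
  { rewrite cos_plus, cos_2PI, sin_2PI, Rplus_0_l. ring. }
  assert (E2 : sin (2 * PI + beta) = sin (0 + beta)).
  { rewrite sin_plus, cos_2PI, sin_2PI, Rplus_0_l. ring. }
  destruct (sol_per 0) as [h1 h2]. rewrite Rplus_0_l in h1, h2.
  unfold theta, Cc, Dd. rewrite h1, h2, E1, E2.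
  pose proof PI_RGT_0. lra.
Qed.


End Sol.

Lemma Xt0 X0 Y0 : Xt X0 Y0 0 = X0.
Proof. unfold Xt. rewrite cos_0, sin_0. ring. Qed.
Lemma Yt0 X0 Y0 : Yt X0 Y0 0 = Y0.
Proof. unfold Yt. rewrite cos_0, sin_0. ring. Qed.

Lemma P3_form x y : P3 a b x y = ww a b x * (x ^ 2 - y).
Proof. unfold P3, ww. ring. Qed.

Definition del := dd a b * Em / (8 * EM).

Lemma init_bd x0 y0 : 0 < x0 ^ 2 + y0 ^ 2 < del ^ 2 ->
  let X0 := xi x0 in let Y0 := exp (F x0) * P3 a b x0 y0 in
  - dd a b <= x0 <= dd a b /\
  X0 ^ 2 + Y0 ^ 2 < (dd a b * Em / 2) ^ 2 /\ 0 < X0 ^ 2 + Y0 ^ 2.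
Proof.
  intros [Hp Hd] X0 Y0.
  pose proof (dd_pos a b). pose proof (dd_small a b). pose proof Em_pos. pose proof Em_EM.
  assert (HEM : 0 < EM) by lra.
  assert (Hdel : 0 < del) by (unfold del; apply Rdiv_lt_0_compat; [apply Rmult_lt_0_compat|]; lra).
  assert (Hdel2 : del <= dd a b / 8).
  { unfold del. apply (Rmult_le_reg_r (8 * EM)); [lra|]. field_simplify; try lra.
    apply Rmult_le_compat_l; lra. }
  assert (Hx0 : x0 ^ 2 < del ^ 2) by (pose proof (pow2_ge_0 y0); lra).
  assert (Hy0 : y0 ^ 2 < del ^ 2) by (pose proof (pow2_ge_0 x0); lra).
  assert (Hxr : - dd a b <= x0 <= dd a b) by nra.
  split; auto.
  destruct (bounds a b x0 Hxr) as [Hw [Hc Hx]]. destruct (E_bd x0 Hxr) as [HE1 HE2].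
  set (E0 := exp (F x0)) in *. set (w := ww a b x0) in *.
  assert (HX : X0 = w * (x0 * (1 + cc a b * x0)) * E0) by reflexivity.
  assert (HY : Y0 = E0 * (w * (x0 ^ 2 - y0))) by (unfold Y0; rewrite P3_form; reflexivity).
  assert (HE2' : E0 ^ 2 <= EM ^ 2) by (apply pow_incr; lra).
  assert (Hw2 : w ^ 2 <= 25/16) by nra.
  assert (Hc2 : (1 + cc a b * x0) ^ 2 <= 25/16) by nra.
  assert (Hg2 : (w * (x0 * (1 + cc a b * x0))) ^ 2 <= 4 * x0 ^ 2).
  { replace ((w * (x0 * (1 + cc a b * x0))) ^ 2) with (w ^ 2 * (1 + cc a b * x0) ^ 2 * x0 ^ 2) by ring.
    assert (w ^ 2 * (1 + cc a b * x0) ^ 2 <= 4).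
    { apply Rle_trans with (25/16 * (25/16)). apply Rmult_le_compat; try apply pow2_ge_0; lra. lra. }
    apply Rmult_le_compat_r. apply pow2_ge_0. lra. }
  assert (HX2 : X0 ^ 2 <= 4 * x0 ^ 2 * EM ^ 2).
  { rewrite HX. replace ((w * (x0 * (1 + cc a b * x0)) * E0) ^ 2) with ((w * (x0 * (1 + cc a b * x0))) ^ 2 * E0 ^ 2) by ring.
    apply Rmult_le_compat; try apply pow2_ge_0; lra. }
  assert (Hq : (x0 ^ 2 - y0) ^ 2 <= 2 * x0 ^ 2 / 64 + 2 * y0 ^ 2).
  { assert (h1 : x0 ^ 2 <= 1/64) by nra.
    assert (h2 : x0 ^ 2 * x0 ^ 2 <= x0 ^ 2 * (1/64)) by (apply Rmult_le_compat_l; [apply pow2_ge_0|lra]).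
    pose proof (pow2_ge_0 (x0 ^ 2 + y0)).
    replace ((x0 ^ 2 - y0) ^ 2) with (2 * (x0 ^ 2 * x0 ^ 2) + 2 * y0 ^ 2 - (x0 ^ 2 + y0) ^ 2) by ring.
    lra. }
  assert (HY2 : Y0 ^ 2 <= EM ^ 2 * (4 * (x0 ^ 2 + y0 ^ 2))).
  { rewrite HY. replace ((E0 * (w * (x0 ^ 2 - y0))) ^ 2) with (E0 ^ 2 * (w ^ 2 * (x0 ^ 2 - y0) ^ 2)) by ring.
    apply Rmult_le_compat; try apply pow2_ge_0; try lra.
    apply Rmult_le_pos; apply pow2_ge_0.
    apply Rle_trans with (25/16 * (2 * x0 ^ 2 / 64 + 2 * y0 ^ 2)).
    apply Rmult_le_compat; try apply pow2_ge_0; lra.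
    pose proof (pow2_ge_0 x0); pose proof (pow2_ge_0 y0); lra. }
  split.
  - assert (HS : X0 ^ 2 + Y0 ^ 2 <= 8 * EM ^ 2 * (x0 ^ 2 + y0 ^ 2)) by nra.
    assert (HS2 : 8 * EM ^ 2 * (x0 ^ 2 + y0 ^ 2) < 8 * EM ^ 2 * del ^ 2).
    { apply Rmult_lt_compat_l; [|lra]. assert (0 < EM ^ 2) by (apply pow2_gt_0; lra). lra. }
    assert (HS3 : 8 * EM ^ 2 * del ^ 2 = (dd a b * Em / 2) ^ 2 / 2) by (unfold del; field; lra).
    assert (0 < (dd a b * Em / 2) ^ 2) by (apply pow2_gt_0; apply Rgt_not_eq; apply Rdiv_lt_0_compat; [apply Rmult_lt_0_compat|]; lra).
    lra.
  - destruct (Req_dec x0 0) as [hx|hx].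
    + assert (hy0 : y0 <> 0) by (intro; subst; simpl in Hp; lra).
      assert (Y0 <> 0).
      { rewrite HY, hx. intro h. apply Rmult_integral in h. destruct h as [h|h]. lra.
        apply Rmult_integral in h. destruct h as [h|h]. lra. apply hy0. simpl in h. lra. }
      assert (0 < Y0 ^ 2) by (apply pow2_gt_0; auto). pose proof (pow2_ge_0 X0). lra.
    + assert (X0 <> 0).
      { rewrite HX. intro h. apply Rmult_integral in h. destruct h as [h|h]; [|lra].
        apply Rmult_integral in h. destruct h as [h|h]; [lra|].
        apply Rmult_integral in h. destruct h as [h|h]; lra. }
      assert (0 < X0 ^ 2) by (apply pow2_gt_0; auto). pose proof (pow2_ge_0 Y0). lra.
Qed.

Lemma iso_core : isochronous_center (P3 a b) (Q3 a b).
Proof.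
  exists del, (2 * PI).
  pose proof (dd_pos a b). pose proof Em_pos. pose proof Em_EM. pose proof PI_RGT_0.
  split. unfold del; apply Rdiv_lt_0_compat; [apply Rmult_lt_0_compat|]; lra.
  split. lra.
  intros x0 y0 H3.
  destruct (init_bd x0 y0 H3) as [Hxr [Hsm HR]].
  set (X0 := xi x0) in *. set (Y0 := exp (F x0) * P3 a b x0 y0) in *.
  assert (Hx0 : xs X0 Y0 0 = x0).
  { unfold xs. rewrite Xt0. apply xinv_xi; auto. }
  assert (Hy0 : ys X0 Y0 0 = y0).
  { unfold ys. rewrite Hx0, Yt0. unfold Y0. rewrite P3_form.
    pose proof (ww_pos a b x0 Hxr). pose proof (exp_pos (F x0)). field. split; lra. }
  exists (xs X0 Y0), (ys X0 Y0), (theta X0 Y0), (rr X0 Y0).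
  split. apply sol_is; auto.
  split. auto. split. auto.
  split. intros t. apply sol_per.
  split. intros s Hs. rewrite <- Hx0, <- Hy0 at 1. apply sol_min; auto.
  split. apply theta_cont; auto.
  split. intros t. apply polar; auto.
  apply theta_per; auto.
Qed.


Lemma xi_of_eq x : - dd a b <= x <= dd a b -> xi_of (fun t => xi t ^ 2 / 2) x = xi x.
Proof. intros H. destruct (bounds a b x H) as [Hw [Hc _]]. pose proof (exp_pos (F x)).
  unfold xi_of. replace (2 * (xi x ^ 2 / 2)) with (xi x ^ 2) by field.
  unfold xi, gg. destruct (Rle_dec 0 x) as [h|h].
  - apply sqrt_pow2. apply Rmult_le_pos; [|lra]. apply Rmult_le_pos; [lra|]. apply Rmult_le_pos; lra.
  - replace ((ww a b x * (x * (1 + cc a b * x)) * exp (F x)) ^ 2)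
      with ((ww a b x * (- x * (1 + cc a b * x)) * exp (F x)) ^ 2) by ring.
    rewrite sqrt_pow2. ring. apply Rmult_le_pos; [|lra]. apply Rmult_le_pos; [lra|]. apply Rmult_le_pos; lra.
Qed.

Lemma urabe_core : zero_urabe (P3 a b) (Q3 a b).
Proof.
  exists (fun x => x ^ 2 * ww a b x), (fun x => - ww a b x),
    (fun x => x + (a - b) / 2 * x ^ 2 + 2 * x ^ 3 + (b - 2 * a) * x ^ 4),
    (fun x => - 2 * x + 2 * (a - b) * x ^ 2 - 2 * K3 a b * x ^ 3),
    (fun x => b + 2 * K3 a b * x),
    (fun x => 2 * x - 3 * a * x ^ 2 - 4 * K3 a b * x ^ 3),
    (fun x => a + 2 * K3 a b * x),
    F, (fun x => xi x ^ 2 / 2), (dd a b).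
  split. intros; unfold P3, ww; ring.
  split. intros; unfold Q3; ring.
  split. ring. split. ring. split. unfold ww; lra.
  split. intros x. unfold ww. eapply D_eq. dauto. simpl; ring.
  split. intros x. unfold ww. eapply D_eq. dauto. simpl; ring.
  split. apply dd_pos.
  cbv zeta.
  split. auto. split. replace (xi 0) with 0 by (unfold xi, gg; ring). field.
  intros x Hx. assert (Hxr : - dd a b <= x <= dd a b) by lra.
  pose proof (ww_pos a b x Hxr).
  assert (Hg : - (b + 2 * K3 a b * x) * (x ^ 2 * ww a b x) ^ 2 / - ww a b x +
      (-2 * x + 2 * (a - b) * x ^ 2 - 2 * K3 a b * x ^ 3) * (x ^ 2 * ww a b x) -
      - ww a b x * (x + (a - b) / 2 * x ^ 2 + 2 * x ^ 3 + (b - 2 * a) * x ^ 4) = gg a b x).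
  { unfold gg, cc. field; lra. }
  split. lra.
  split. field; lra.
  split. eapply D_eq. apply HFd; auto. unfold fr. field. lra.
  split. eapply D_eq. apply D_div. apply D_pow. apply xi_D; auto. apply D_const. lra.
    rewrite Hg. unfold xi. replace (2 * F x) with (F x + F x) by ring. rewrite exp_plus. simpl. field.
  split. pose proof (pow2_ge_0 (xi x)). lra.
  rewrite Hg, xi_of_eq by auto. split.
  - intros hx. unfold xi, gg. destruct (bounds a b x Hxr) as [_ [Hc _]]. pose proof (exp_pos (F x)).
    replace (x * (ww a b x * (x * (1 + cc a b * x)) * exp (F x))) with (x ^ 2 * (ww a b x * (1 + cc a b * x) * exp (F x))) by ring.
    apply Rmult_lt_0_compat. apply pow2_gt_0; auto. apply Rmult_lt_0_compat; [apply Rmult_lt_0_compat|]; lra.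
  - reflexivity.
Qed.

End Core.

Lemma main3 a b : isochronous_center (P3 a b) (Q3 a b) /\ zero_urabe (P3 a b) (Q3 a b).
Proof. destruct (F_exists a b) as [F [H0 Hd]]. split.
  - apply iso_core with (F := F); auto.
  - apply urabe_core with (F := F); auto.
Qed.

Lemma eqP1 a : P1 a = P3 a (3 * a).
Proof. apply functional_extensionality; intro x; apply functional_extensionality; intro y.
  unfold P1, P3, K3. field. Qed.
Lemma eqQ1 a : Q1 a = Q3 a (3 * a).
Proof. apply functional_extensionality; intro x; apply functional_extensionality; intro y.
  unfold Q1, Q3, K3. field. Qed.
Lemma eqP2 a : P2 a = P3 a (4 * a).
Proof. apply functional_extensionality; intro x; apply functional_extensionality; intro y.
  unfold P2, P3, K3. field. Qed.
Lemma eqQ2 a : Q2 a = Q3 a (4 * a).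
Proof. apply functional_extensionality; intro x; apply functional_extensionality; intro y.
  unfold Q2, Q3, K3. field. Qed.

Theorem theorem4p2 (a b : R) :
  (isochronous_center (P1 a) (Q1 a) /\ zero_urabe (P1 a) (Q1 a)) /\
  (isochronous_center (P2 a) (Q2 a) /\ zero_urabe (P2 a) (Q2 a)) /\
  (isochronous_center (P3 a b) (Q3 a b) /\ zero_urabe (P3 a b) (Q3 a b)).
Proof.
  rewrite eqP1, eqQ1, eqP2, eqQ2. split; [|split]; apply main3.
Qed.
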